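(* Let $\lambda$ be a nonzero real number and $n$ a positive integer. Then $$(n-1)!\,H_{n,-\lambda}=\sum_{k=1}^{n}(-1)^{n-k}\beta_{k-1,\lambda}(1-\lambda)\,S_{1,-\lambda}(n,k).$$
   Context: For a nonzero real parameter $\mu$ (used here with $\mu=\lambda$ and $\mu=-\lambda$), real $y$ and integer $k\ge0$: $(y)_{0,\mu}=1$, $(y)_{k,\mu}=y(y-\mu)\cdots(y-(k-1)\mu)$; $(y)_0=1$, $(y)_k=y(y-1)\cdots(y-k+1)$. The degenerate exponential is $e_\mu^x(t)=\sum_{k\ge0}(x)_{k,\mu}t^k/k!=(1+\mu t)^{x/\mu}$, $e_\mu(t)=e^1_\mu(t)$. The degenerate Bernoulli polynomials are defined by $\frac{t}{e_\mu(t)-1}e_\mu^x(t)=\sum_{n\ge0}\beta_{n,\mu}(x)\frac{t^n}{n!}$. The degenerate Stirling numbers of the first kind $S_{1,\mu}(n,k)$ are defined by $(x)_{n}=\sum_{k=0}^{n}S_{1,\mu}(n,k)(x)_{k,\mu}$ ($n\ge0$). The degenerate harmonic numbers are $H_{0,\mu}=0$ and $H_{n,\mu}=\sum_{k=1}^{n}\frac{1}{\mu}\binom{\mu}{k}(-1)^{k-1}$ for $n\ge1$. *)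

(* Defs.v *)
From mathcomp Require Import all_boot all_order all_algebra.
Set Implicit Arguments. Unset Strict Implicit. Unset Printing Implicit Defensive.
Import Order.TTheory GRing.Theory Num.Theory.
Local Open Scope ring_scope.

Section Degenerate.
Variable R : realFieldType.

Definition dfall (mu y : R) (k : nat) : R := \prod_(i < k) (y - i%:R * mu).

Definition ffall (y : R) (k : nat) : R := \prod_(i < k) (y - i%:R).

Definition gbinom (y : R) (k : nat) : R := ffall y k / (k`!)%:R.

Definition fps_mul (a b : nat -> R) (n : nat) : R :=
  \sum_(i < n.+1) a i * b (n - i)%N.

(* coefficients of e_mu^x(t) = sum_k (x)_{k,mu} t^k / k! *)
Definition dexp_coef (mu x : R) (k : nat) : R := dfall mu x k / (k`!)%:R.

(* beta is the family of degenerate Bernoulli polynomials for parameter mu: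
   as formal power series in t,
   (e_mu(t) - 1) * sum_n beta n x t^n/n! = t * e_mu^x(t),
   i.e. sum_n beta n x t^n/n! = t/(e_mu(t)-1) * e_mu^x(t). *)
Definition is_deg_bernoulli (mu : R) (beta : nat -> R -> R) : Prop :=
  forall (x : R) (n : nat),
    fps_mul (fun k => if k == 0%N then 0 else dexp_coef mu 1 k)
            (fun k => beta k x / (k`!)%:R) n
    = (if n == 0%N then 0 else dexp_coef mu x n.-1).

Definition is_deg_stirling1 (mu : R) (S : nat -> nat -> R) : Prop :=
  forall (n : nat) (x : R), ffall x n = \sum_(k < n.+1) S n k * dfall mu x k.

Definition deg_harmonic (mu : R) (n : nat) : R :=
  \sum_(1 <= k < n.+1) mu^-1 * gbinom mu k * (-1) ^+ (k.-1).

End Degenerate.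

(* Main.v *)
Require Import Defs.
From mathcomp Require Import all_boot all_order all_algebra.
From mathcomp Require Import ring lra.
Import Order.TTheory GRing.Theory Num.Theory.
Local Open Scope ring_scope.

Lemma dfallS (R : realFieldType) (mu x : R) k :
  dfall mu x k.+1 = dfall mu x k * (x - k%:R * mu).
Proof. by rewrite /dfall big_ord_recr. Qed.

Lemma dfallSl (R : realFieldType) (mu x : R) k :
  dfall mu x k.+1 = x * dfall mu (x - mu) k.
Proof.
rewrite /dfall big_ord_recl /= mul0r subr0; congr (_ * _).
apply: eq_bigr => i _; rewrite /bump /= natrD; ring.
Qed.

Lemma ffallS (R : realFieldType) (x : R) k :
  ffall x k.+1 = ffall x k * (x - k%:R).
Proof. by rewrite /ffall big_ord_recr. Qed.

Lemma ffallSl (R : realFieldType) (x : R) k :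
  ffall x k.+1 = x * ffall (x - 1) k.
Proof.
rewrite /ffall big_ord_recl /= subr0; congr (_ * _).
apply: eq_bigr => i _; rewrite /bump /= natrD; ring.
Qed.

Lemma dfall_neg (R : realFieldType) (lam x : R) k :
  dfall (- lam) x k = (-1) ^+ k * dfall lam (- x) k.
Proof.
elim: k => [|k IH]; first by rewrite /dfall !big_ord0 mulr1.
rewrite !dfallS IH exprS; ring.
Qed.

Lemma ffall_neg (R : realFieldType) (w : R) k :
  ffall (- w) k = (-1) ^+ k * \prod_(i < k) (w + i%:R).
Proof.
elim: k => [|k IH]; first by rewrite /ffall !big_ord0 mulr1.
rewrite ffallS IH big_ord_recr exprS /=; ring.
Qed.
Lemma sum_widen (R : realFieldType) (f : nat -> R) k N :
  (k <= N)%N -> (forall j, (k < j)%N -> f j = 0) ->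
  \sum_(j < k.+1) f j = \sum_(j < N.+1) f j.
Proof.
move=> kN f0.
rewrite -!(big_mkord xpredT) [RHS](big_cat_nat (n := k.+1)) //=.
rewrite [X in _ + X]big_nat_cond [X in _ + X]big1 ?addr0 // => j /andP[/andP[Hj _] _].
exact: f0.
Qed.

Lemma vandermonde (R : realFieldType) (lam x y : R) k :
  dfall lam (x + y) k =
  \sum_(i < k.+1) 'C(k, i)%:R * dfall lam x i * dfall lam y (k - i).
Proof.
elim: k => [|k IH].
  by rewrite big_ord_recl big_ord0 addr0 /dfall !big_ord0 bin0 !mul1r.
rewrite dfallS IH big_distrl /=.
rewrite [RHS]big_ord_recl /= [X in _ = _ + X](eq_bigr (fun i : 'I_k.+1 =>
   'C(k, i.+1)%:R * dfall lam x i.+1 * dfall lam y (k.+1 - i.+1)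
   + 'C(k, i)%:R * dfall lam x i.+1 * dfall lam y (k.+1 - i.+1))); last first.
  by move=> i _; rewrite binS natrD; ring.
rewrite big_split /= addrA bin0 mul1r subn0.
have -> : dfall lam x 0 * dfall lam y k.+1 +
   \sum_(i < k.+1) 'C(k, i.+1)%:R * dfall lam x i.+1 * dfall lam y (k.+1 - i.+1)
   = \sum_(i < k.+1) 'C(k, i)%:R * dfall lam x i * dfall lam y (k.+1 - i).
  rewrite [RHS]big_ord_recl /= bin0 mul1r; congr (_ + _).
  rewrite big_ord_recr /= bin_small // mul0r mul0r addr0.
  apply: eq_bigr => i _. done.
rewrite -big_split /=; apply: eq_bigr => i _.
have hi : (i <= k)%N by rewrite -ltnS.
rewrite subSS subSn // !dfallS natrB //; ring.
Qed.

Lemma dfall_zero (R : realFieldType) (lam : R) i k :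
  (i < k)%N -> dfall lam (i%:R * lam) k = 0.
Proof.
elim: k => // k IH; rewrite dfallS ltnS leq_eqVlt => /orP[/eqP-> | /IH->].
  by rewrite subrr mulr0.
by rewrite mul0r.
Qed.

Lemma dfall_nz (R : realFieldType) (lam : R) i :
  lam != 0 -> dfall lam (i%:R * lam) i != 0.
Proof.
move=> hl; apply/prodf_neq0 => j _.
rewrite -mulrBl mulf_neq0 // subr_eq0 eqr_nat.
by apply/eqP => hij; move: (ltn_ord j); rewrite -hij ltnn.
Qed.

Lemma uniq_coef (R : realFieldType) (lam : R) N (c : nat -> R) :
  lam != 0 ->
  (forall i, (i < N)%N -> \sum_(k < N) c k * dfall lam (i%:R * lam) k = 0) ->
  forall k, (k < N)%N -> c k = 0.
Proof.
move=> hl H k; elim: k {-2}k (leqnn k) => [|m IH] k hk kN.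
- move: (H _ kN); rewrite (bigD1 (Ordinal kN)) //= big1 ?addr0.
    by move/eqP; rewrite mulf_eq0 (negbTE (dfall_nz _ _ _ hl)) orbF => /eqP.
  move=> j /= hj; rewrite dfall_zero ?mulr0 //.
  move: hk; rewrite leqn0 => /eqP hk0; subst k; rewrite lt0n.
  by apply: contra hj => /eqP hj0; apply/eqP/val_inj; rewrite /= hj0.
- move: (H _ kN); rewrite (bigD1 (Ordinal kN)) //= big1 ?addr0.
    by move/eqP; rewrite mulf_eq0 (negbTE (dfall_nz _ _ _ hl)) orbF => /eqP.
  move=> j /= hj; case: (ltngtP j k) => [jk|kj|jk].
  + by rewrite (IH j) ?mul0r // -ltnS (leq_trans jk).
  + by rewrite dfall_zero ?mulr0.
  + by move: hj; rewrite (_ : j = Ordinal kN) ?eqxx //; apply: val_inj.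
Qed.

Lemma expand_prod (R : realFieldType) (lam : R) m (a : nat -> R) :
  exists c : nat -> R, forall z,
    \prod_(i < m) (z - a i) = \sum_(k < m.+1) c k * dfall lam z k.
Proof.
elim: m => [|m [c Hc]].
  by exists (fun _ => 1) => z; rewrite big_ord0 big_ord_recl big_ord0 /dfall big_ord0 !mulr1 addr0.
exists (fun k => (if k is k'.+1 then c k' else 0) +
                 (if (k <= m)%N then (k%:R * lam - a m) * c k else 0)) => z.
rewrite big_ord_recr /= Hc big_distrl /=.
rewrite [RHS](eq_bigr (fun k : 'I_m.+2 => (if k : nat is k'.+1 then c k' else 0) * dfall lam z k + (if (k <= m)%N then (k%:R * lam - a m) * c k else 0) * dfall lam z k)); last by move=> k _; rewrite mulrDl.
rewrite big_split /= [in X in _ = X + _]big_ord_recl /= mul0r add0r.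
rewrite [in X in _ = _ + X]big_ord_recr /= ltnn mul0r addr0.
rewrite -big_split /=; apply: eq_bigr => k _.
have -> : (k <= m)%N by rewrite -ltnS.
rewrite dfallS; ring.
Qed.

Lemma prod_fact (R : realFieldType) n :
  \prod_(i < n) (1 + i%:R) = (n`!)%:R :> R.
Proof.
elim: n => [|n IH]; first by rewrite big_ord0.
rewrite big_ord_recr /= IH factS natrM -addn1 natrD; ring.
Qed.

Lemma harm (R : realFieldType) (lam : R) n : lam != 0 ->
  deg_harmonic (- lam) n =
  (- lam)^-1 * (1 - (\prod_(i < n) (1 + lam + i%:R)) / (n`!)%:R).
Proof.
move=> hl; rewrite /deg_harmonic.
elim: n => [|n IH].
  by rewrite big_geq // big_ord0 divr1 subrr mulr0.
rewrite big_nat_recr //= IH.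
rewrite /gbinom ffall_neg big_ord_recl big_ord_recr /=.
have -> : \prod_(i < n) (lam + (bump 0 i)%:R) = \prod_(i < n) (1 + lam + i%:R).
  by apply: eq_bigr => i _; rewrite /bump /= natrD; ring.
set A := \prod_(i < n) (1 + lam + i%:R).
have hf : (n`!)%:R != 0 :> R by rewrite pnatr_eq0 -lt0n fact_gt0.
have hn : (1 + n%:R) != 0 :> R by rewrite addrC natr1 pnatr_eq0.
rewrite factS natrM exprS -[(-1) ^+ n]signr_odd; case: (odd n) => /=;
  rewrite ?expr0 ?expr1; field; rewrite ?hl ?hf ?hn ?oppr_eq0 ?mulf_neq0 //. all: by rewrite /= -natr1 addrC.
Qed.

Lemma bern (R : realFieldType) (lam : R) beta y k :
  is_deg_bernoulli lam beta ->
  \sum_(j < k.+1) ('C(k, j)%:R * dfall lam 1 (k - j) - (j == k :> nat)%:R) * beta j y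
  = k%:R * dfall lam y k.-1.
Proof.
move=> H; case: k => [|k].
  by rewrite big_ord_recl big_ord0 /= /dfall !big_ord0 bin0 mul1r subrr mul0r mul0r addr0.
have := H y k.+1; rewrite /fps_mul /= /dexp_coef => Hk.
have hf : forall m, (m`!)%:R != 0 :> R by move=> m; rewrite pnatr_eq0 -lt0n fact_gt0.
have -> : k.+1%:R * dfall lam y k = (k.+1`!)%:R * (dfall lam y k / (k`!)%:R).
  by rewrite factS natrM; field.
rewrite -Hk mulr_sumr (reindex_inj rev_ord_inj) /=.
apply: eq_bigr => j _; rewrite subSS.
have hj : (j <= k.+1)%N by rewrite -ltnS.
rewrite subKn //.
case: (eqVneq (j : nat) 0%N) => [-> | hj0].
  by rewrite subn0 eqxx binn /dfall big_ord0 mulr1 subrr !mul0r mulr0.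
have -> : (k.+1 - j == k.+1)%N = false.
  by apply/negbTE; rewrite neq_ltn ltn_subrL lt0n hj0.
rewrite /= ?subr0 bin_sub //.
have hb := bin_fact hj.
have -> : 'C(k.+1, j)%:R = (k.+1`!)%:R / ((j`!)%:R * ((k.+1 - j)`!)%:R) :> R.
  by rewrite -hb !natrM; field; rewrite hf hf.
by field; rewrite hf hf.
Qed.

Lemma dfall_diff (R : realFieldType) (lam y : R) k :
  dfall lam (y + lam) k - dfall lam y k = k%:R * lam * dfall lam y k.-1.
Proof.
case: k => [|k]; first by rewrite /dfall !big_ord0 subrr !mul0r.
rewrite dfallSl dfallS addrK /=; rewrite -addn1 natrD; ring.
Qed.

Lemma sign_sub (R : realFieldType) m j : (j <= m)%N ->
  (-1) ^+ (m - j) = (-1) ^+ m * (-1) ^+ j :> R.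
Proof.
move=> hj; rewrite -{2}(subnK hj) exprD -mulrA -exprD addnn.
by rewrite -mul2n mulnC exprM sqrr_sign mulr1.
Qed.

Lemma delta_sum (R : realFieldType) N (g : nat -> R) k : (k < N)%N ->
  \sum_(j < N) (j == k :> nat)%:R * g j = g k.
Proof.
move=> hk; rewrite (bigD1 (Ordinal hk)) //= eqxx mul1r big1 ?addr0 //.
move=> j hj; suff -> : (j == k :> nat) = false by rewrite mul0r.
by apply/negbTE; apply: contra hj => /eqP hjk; apply/eqP/val_inj.
Qed.

Theorem theorem8 (R : realFieldType) (lam : R) (beta : nat -> R -> R)
    (S : nat -> nat -> R) (n : nat) :
  lam != 0 ->
  is_deg_bernoulli lam beta ->
  is_deg_stirling1 (- lam) S ->
  (0 < n)%N ->
  ((n.-1)`!)%:R * deg_harmonic (- lam) n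
  = \sum_(1 <= k < n.+1) (-1) ^+ (n - k) * beta k.-1 (1 - lam) * S n k.
Proof.
move=> hl hB hS; case: n => [//|m] _.
pose a i := - (lam + i%:R).
have [c Hc] := expand_prod _ lam m.+1 a.
pose A z := \prod_(i < m.+1) (z - a i).
pose V z := \prod_(i < m) (z + lam + 1 + i%:R).
pose X k j := 'C(k, j)%:R * dfall lam 1 (k - j) - (j == k :> nat)%:R.
pose q j := \sum_(k < m.+2) c k * X k j.
pose w j := (m.+1)%:R * ((-1) ^+ m * (if (j < m.+1)%N then S m.+1 j.+1 * (-1) ^+ j else 0)).
have hm1 : (m.+1)%:R != 0 :> R by rewrite pnatr_eq0.
have hm1' : 1 + m%:R != 0 :> R by rewrite addrC natr1 pnatr_eq0.
have stepD : forall z, A (z + 1) - A z = \sum_(j < m.+2) q j * dfall lam z j.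
  move=> z; rewrite /A !Hc -sumrB.
  rewrite [RHS](eq_bigr (fun j : 'I_m.+2 => \sum_(k < m.+2) c k * X k j * dfall lam z j)); last by move=> j _; rewrite /q mulr_suml.
  rewrite exchange_big /=; apply: eq_bigr => k _.
  rewrite -mulrBr; under eq_bigr => j _ do rewrite -mulrA.
  rewrite -mulr_sumr; congr (_ * _).
  have hk : (k <= m.+1)%N by rewrite -ltnS.
  rewrite vandermonde (@sum_widen _ (fun i => 'C(k, i)%:R * dfall lam z i * dfall lam 1 (k - i)) _ _ hk); last by move=> j hj; rewrite bin_small // !mul0r.
  rewrite -[X in _ - X](@delta_sum _ _ (fun j => dfall lam z j) _ (ltn_ord k)) -sumrB.
  by apply: eq_bigr => j _; rewrite /X; ring.
have stepV : forall z, A (z + 1) - A z = (m.+1)%:R * V z.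
  move=> z; rewrite /A [X in _ - X]big_ord_recl [X in X - _]big_ord_recr /= /V.
  have -> : \prod_(i < m) (z - a (bump 0 i)) = \prod_(i < m) (z + lam + 1 + i%:R).
    by apply: eq_bigr => i _; rewrite /a /bump /= natrD; ring.
  have -> : \prod_(i < m) (z + 1 - a i) = \prod_(i < m) (z + lam + 1 + i%:R).
    by apply: eq_bigr => i _; rewrite /a; ring.
  rewrite /a -addn1 natrD; ring.
have S0 : S m.+1 0%N = 0.
  have := hS m.+1 0; rewrite ffallSl mul0r big_ord_recl /=.
  rewrite big1 ?addr0; last by move=> j _; rewrite dfallSl mul0r mulr0.
  by rewrite /dfall big_ord0 mulr1 => <-.
have stepS : forall z, z + lam != 0 ->
    (-1) ^+ m * V z = \sum_(j < m.+1) S m.+1 j.+1 * (-1) ^+ j * dfall lam z j.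
  move=> z hz; have := hS m.+1 (- (z + lam)).
  rewrite ffallSl big_ord_recl /= S0 mul0r add0r.
  under eq_bigr => j _ do rewrite dfallSl mulrCA.
  rewrite -mulr_sumr => /mulfI; rewrite oppr_eq0 => /(_ hz) H.
  have e : - (z + lam) - 1 = - (z + lam + 1) by ring.
  rewrite e ffall_neg in H; rewrite /V H; apply: eq_bigr => j _.
  rewrite dfall_neg (_ : - (- (z + lam) - - lam) = z); last by ring.
  ring.
have stepU : forall j, (j < m.+2)%N -> q j = w j.
  move=> j hj; apply/eqP; rewrite -subr_eq0; apply/eqP.
  apply: (@uniq_coef _ lam m.+2 (fun j => q j - w j) hl) => // i hi.
  have hz : i%:R * lam + lam != 0.
    by rewrite -[X in _ + X]mul1r -mulrDl mulf_neq0 // natr1 pnatr_eq0.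
  under eq_bigr => k _ do rewrite mulrBl.
  rewrite sumrB -stepD stepV big_ord_recr /= {2}/w ltnn mulr0 mulr0 mul0r addr0.
  have -> : \sum_(j < m.+1) w j * dfall lam (i%:R * lam) j =
     (m.+1)%:R * ((-1) ^+ m * \sum_(j < m.+1) S m.+1 j.+1 * (-1) ^+ j * dfall lam (i%:R * lam) j).
    rewrite mulr_sumr mulr_sumr; apply: eq_bigr => j' _; rewrite /w /= ltn_ord; ring.
  by rewrite -stepS // [_ * (_ * V _)]mulrA -expr2 sqrr_sign mul1r subrr.
have hf : (m`!)%:R != 0 :> R by rewrite pnatr_eq0 -lt0n fact_gt0.
have stepR : \sum_(1 <= k < m.+2) (-1) ^+ (m.+1 - k) * beta k.-1 (1 - lam) * S m.+1 k
    = (m.+1)%:R^-1 * \sum_(j < m.+2) w j * beta j (1 - lam).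
  rewrite big_add1 /= big_mkord [X in _ = _ * X]big_ord_recr /= [w m.+1]/w ltnn mulr0 mulr0 mul0r addr0 mulr_sumr.
  apply: eq_bigr => j _; rewrite /w ltn_ord subSS (@sign_sub R m j (ltn_ord j)).
  by field; rewrite addrC natr1 pnatr_eq0.
have stepQ : \sum_(j < m.+2) w j * beta j (1 - lam)
    = lam^-1 * (A (1 - lam + lam) - A (1 - lam)).
  rewrite (eq_bigr (fun j : 'I_m.+2 => q j * beta j (1 - lam))); last first.
    by move=> j _; rewrite (stepU j (ltn_ord j)).
  rewrite /q; under eq_bigr => j' _ do rewrite mulr_suml.
  rewrite exchange_big /= /A !Hc -sumrB mulr_sumr; apply: eq_bigr => k _.
  under eq_bigr => j _ do rewrite -mulrA.
  rewrite -mulr_sumr.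
  have hk : (k <= m.+1)%N by rewrite -ltnS.
  rewrite -(@sum_widen _ (fun j => X k j * beta j (1 - lam)) k m.+1 hk); last first.
    by move=> j hj; rewrite /X bin_small // gtn_eqF //= mul0r subr0 mul0r.
  rewrite (@bern _ lam beta (1 - lam) k hB) -mulrBr dfall_diff.
  by field; rewrite ?hl.
rewrite stepR stepQ harm //= subrK.
have -> : A 1 = \prod_(i < m.+1) (1 + lam + i%:R).
  by apply: eq_bigr => i _; rewrite /a; ring.
have -> : A (1 - lam) = (m.+1`!)%:R.
  rewrite -prod_fact; apply: eq_bigr => i _; rewrite /a; ring.
rewrite factS natrM; field.
by rewrite ?hl ?hf ?hm1 ?hm1'.
Qed.
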